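(* Let $r\ge 2$ be real, let $q$ be an $r$-mighty prime, and let $p_m$ be a prime with $p_m>q^2$. Let $n\in\mathbb{S}$ satisfy $$\sigma_{-r}(q)<\sigma_{-r}(n)<\sigma_{-r}(qp_m).$$ Then $q\mid n$ (i.e. $v_q(n)\ge1$), and $q$ is the smallest prime $p$ with $v_p(n)>0$.
   Context: $p_m$ denotes the $m$-th prime. A Steinitz number is a formal product $n=\prod_p p^{\alpha_p}$ over all primes with $\alpha_p\in\mathbb{Z}_{\ge0}\cup\{\infty\}$; $v_p(n)=\alpha_p$; $\mathbb{S}$ is the set of Steinitz numbers. For real $r>1$, $\sigma_{-r}$ is defined on $\mathbb{S}$ multiplicatively with $\sigma_{-r}(p^\alpha)=\sum_{i=0}^\alpha p^{-ri}$ for finite $\alpha$ and $\sigma_{-r}(p^\infty)=\frac1{1-p^{-r}}$ (on $\mathbb{N}$ this is $\sum_{d\mid n}d^{-r}$). Let $u_m(r)=\prod_{t=m+1}^\infty\frac1{1-p_t^{-r}}$. A prime $p_m$ is $r$-mighty if $1+p_m^{-r}>u_m(r)$. *)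

(* Defs.v *)
From Stdlib Require Import Reals ZArith Znumtheory Arith.
From Coquelicot Require Import Coquelicot.
Open Scope R_scope.

(* Exponents of a Steinitz number: Z_{>=0} \cup {infinity}. *)
Inductive extnat : Type := Fin (k : nat) | Inf.

(* A Steinitz number, given by its exponent at each prime p.
   Values at non-prime arguments are irrelevant (never used). *)
Definition Steinitz : Type := nat -> extnat.

Definition is_prime (p : nat) : Prop := prime (Z.of_nat p).

(* p-adic valuation of a natural number k (fuel = k suffices) *)
Fixpoint vp_aux (fuel p k : nat) : nat :=
  match fuel with
  | O => O
  | S f => if andb (andb (1 <? p)%nat (0 <? k)%nat) (k mod p =? 0)%nat
           then S (vp_aux f p (k / p)) else O
  end.
Definition vp (p k : nat) : nat := vp_aux k p k.

Definition steinitz_of_nat (k : nat) : Steinitz := fun p => Fin (vp p k).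

Definition sigma_pp (r : R) (p : nat) (a : extnat) : R :=
  match a with
  | Fin k => sum_f_R0 (fun i => Rpower (INR p) (- r * INR i)) k
  | Inf => / (1 - Rpower (INR p) (- r))
  end.

Fixpoint pprod (f : nat -> R) (N : nat) : R :=
  match N with
  | O => 1
  | S N' => pprod f N' * (if prime_dec (Z.of_nat N') then f N' else 1)
  end.

(* sigma_{-r}(n) = prod over all primes of sigma_{-r}(p^{v_p(n)}),
   the infinite product being the limit of its partial products. *)
Definition sigma_r (r : R) (n : Steinitz) : R :=
  real (Lim_seq (fun N => pprod (fun p => sigma_pp r p (n p)) N)).

(* u_m(r) with q = p_m : product over primes t > q of 1/(1 - t^{-r}) *)
Definition u_after (r : R) (q : nat) : R :=
  real (Lim_seq (fun N =>
    pprod (fun p => if (q <? p)%nat then / (1 - Rpower (INR p) (- r)) else 1) N)).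

Definition mighty (r : R) (q : nat) : Prop :=
  is_prime q /\ 1 + Rpower (INR q) (- r) > u_after r q.

(* Main.v *)
Require Import Defs.
From Stdlib Require Import Reals ZArith Znumtheory Arith Lia Lra.
From Coquelicot Require Import Coquelicot.
Open Scope R_scope.

Definition tt (r : R) (p : nat) := Rpower (INR p) (- r).

Lemma INR_ge2 p : (2 <= p)%nat -> 2 <= INR p.
Proof. intros H. apply le_INR in H. simpl in H. lra. Qed.

Lemma tt_pos r p : 0 < tt r p.
Proof. unfold tt, Rpower. apply exp_pos. Qed.

Lemma tt_le r p : 2 <= r -> (2 <= p)%nat -> tt r p <= / (INR p ^ 2).
Proof.
  intros Hr Hp. pose proof (INR_ge2 p Hp). unfold tt.
  apply Rle_trans with (Rpower (INR p) (- INR 2)).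
  - apply Rle_Rpower; [lra|]. simpl. lra.
  - rewrite Rpower_Ropp, Rpower_pow by lra. lra.
Qed.

Lemma sigma_pp_Fin r p k : (2 <= p)%nat ->
  sigma_pp r p (Fin k) = sum_f_R0 (fun i => tt r p ^ i) k.
Proof.
  intros Hp. pose proof (INR_ge2 p Hp). simpl. apply sum_eq. intros i _.
  unfold tt. rewrite <- Rpower_pow by (unfold Rpower; apply exp_pos).
  rewrite Rpower_mult. reflexivity.
Qed.

Lemma sigma_pp0 r p : (2 <= p)%nat -> sigma_pp r p (Fin 0) = 1.
Proof. intros Hp. rewrite sigma_pp_Fin by exact Hp. simpl. ring. Qed.

Lemma sigma_pp1 r p : (2 <= p)%nat -> sigma_pp r p (Fin 1) = 1 + tt r p.
Proof. intros Hp. rewrite sigma_pp_Fin by exact Hp. simpl. ring. Qed.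

Lemma sigma_pp_bounds r p a : 2 <= r -> (2 <= p)%nat ->
  1 <= sigma_pp r p a <= / (1 - tt r p) /\
  (a <> Fin 0 -> 1 + tt r p <= sigma_pp r p a) /\
  / (1 - tt r p) <= INR p ^ 2 / (INR p ^ 2 - 1).
Proof.
  intros Hr Hp. pose proof (INR_ge2 p Hp) as Hp2.
  pose proof (tt_pos r p) as T0. pose proof (tt_le r p Hr Hp) as T1.
  set (t := tt r p) in *.
  assert (Tq : t <= / 4).
  { eapply Rle_trans; [exact T1|]. apply Rinv_le_contravar; nra. }
  assert (Hinv : 1 + t <= / (1 - t)).
  { replace (/ (1 - t)) with (1 / (1 - t)) by (field; lra).
    apply Rcomplements.Rle_div_r; [lra|]. nra. }
  split; [|split].
  - destruct a as [k|]; [|simpl; change (Rpower (INR p) (- r)) with t; split; lra].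
    rewrite sigma_pp_Fin by exact Hp. fold t. split.
    + induction k as [|k IH]; simpl; [lra|].
      pose proof (pow_le t (S k) (Rlt_le _ _ T0)). simpl in H. lra.
    + rewrite tech3 by lra. unfold Rdiv. apply Rle_trans with (1 * / (1 - t)); [apply Rmult_le_compat_r|lra].
      * apply Rlt_le, Rinv_0_lt_compat; lra.
      * pose proof (pow_le t (S k) (Rlt_le _ _ T0)). lra.
  - intros Ha. destruct a as [k|]; [|simpl; change (Rpower (INR p) (- r)) with t; lra].
    destruct k as [|k]; [congruence|]. rewrite sigma_pp_Fin by exact Hp. fold t.
    clear Ha. induction k as [|k IH]; simpl; [lra|].
    simpl in IH. pose proof (pow_le t (S (S k)) (Rlt_le _ _ T0)). simpl in H. lra.
  - unfold Rdiv. rewrite <- (Rinv_inv (INR p ^ 2)) at 1.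
    rewrite <- Rinv_mult. apply Rinv_le_contravar.
    + apply Rmult_lt_0_compat; [apply Rinv_0_lt_compat|]; nra.
    + assert (E : / INR p ^ 2 * (INR p ^ 2 - 1) = 1 - / INR p ^ 2) by (field; nra).
      rewrite E. lra.
Qed.

Lemma lim_facts (u : nat -> R) : (forall N M, (N <= M)%nat -> u N <= u M) ->
  (forall N, 1 <= u N <= 2) ->
  Lim_seq u = Finite (real (Lim_seq u)) /\ (forall N, u N <= real (Lim_seq u)).
Proof.
  intros Hm Hb.
  assert (L1 : forall N, Rbar_le (u N) (Lim_seq u)).
  { intros N. rewrite <- (Lim_seq_const (u N)). apply Lim_seq_le_loc.
    exists N. intros k Hk. now apply Hm. }
  assert (L2 : Rbar_le (Lim_seq u) 2).
  { rewrite <- (Lim_seq_const 2). apply Lim_seq_le_loc. exists 0%nat. intros k _. apply Hb. }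
  pose proof (L1 0%nat) as L0.
  destruct (Lim_seq u) as [l| |]; simpl in *; try contradiction.
  split; [reflexivity|]. exact L1.
Qed.
Lemma is_prime_ge2 p : is_prime p -> (2 <= p)%nat.
Proof. intro H. apply prime_ge_2 in H. lia. Qed.

Lemma nat_div_Z a b : Nat.divide a b -> (Z.of_nat a | Z.of_nat b)%Z.
Proof. intros [c ->]. exists (Z.of_nat c). apply Nat2Z.inj_mul. Qed.

Lemma prime_eq_of_div p q : is_prime p -> is_prime q -> Nat.divide p q -> p = q.
Proof. intros Hp Hq Hd. apply Nat2Z.inj. apply prime_div_prime; auto. now apply nat_div_Z. Qed.

Lemma vp_nodiv p k : (k mod p <> 0)%nat -> vp p k = 0%nat.
Proof.
  intros H. unfold vp. destruct k as [|k]; [reflexivity|].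
  cbn [vp_aux]. replace (S k mod p =? 0)%nat with false.
  - now rewrite Bool.andb_false_r.
  - symmetry. now apply Nat.eqb_neq.
Qed.

Lemma vp_once p k : (1 < p)%nat -> (0 < k)%nat -> (k mod p = 0)%nat ->
  ((k / p) mod p <> 0)%nat -> vp p k = 1%nat.
Proof.
  intros H1 H2 H3 H4. unfold vp. destruct k as [|k]; [lia|].
  cbn [vp_aux].
  replace (1 <? p)%nat with true by (symmetry; now apply Nat.ltb_lt).
  replace (0 <? S k)%nat with true by (symmetry; now apply Nat.ltb_lt).
  rewrite H3. simpl. f_equal.
  destruct k as [|k]; [reflexivity|]. cbn [vp_aux].
  replace ((S (S k) / p) mod p =? 0)%nat with false.
  - now rewrite Bool.andb_false_r.
  - symmetry. now apply Nat.eqb_neq.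
Qed.

Lemma mod_ne0_of_notdiv a p : p <> 0%nat -> ~ Nat.divide p a -> (a mod p <> 0)%nat.
Proof. intros Hp Hn E. apply Hn. now apply Nat.Lcm0.mod_divide. Qed.

Lemma vp_q_q q : is_prime q -> vp q q = 1%nat.
Proof.
  intros Hq. pose proof (is_prime_ge2 _ Hq).
  apply vp_once; try lia. apply Nat.Div0.mod_same.
  rewrite Nat.div_same by lia. rewrite Nat.mod_small; lia.
Qed.

Lemma vp_p_q p q : is_prime p -> is_prime q -> p <> q -> vp p q = 0%nat.
Proof.
  intros Hp Hq Hne. pose proof (is_prime_ge2 _ Hp).
  apply vp_nodiv. apply mod_ne0_of_notdiv; [lia|].
  intro D. apply Hne. now apply prime_eq_of_div.
Qed.

Lemma vp_q_qpm q pm : is_prime q -> is_prime pm -> (q < pm)%nat -> vp q (q*pm) = 1%nat.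
Proof.
  intros Hq Hpm Hlt. pose proof (is_prime_ge2 _ Hq).
  apply vp_once; try lia.
  - nia.
  - rewrite Nat.mul_comm. apply Nat.Div0.mod_mul.
  - rewrite Nat.mul_comm, Nat.div_mul by lia. apply mod_ne0_of_notdiv; [lia|].
    intro D. apply prime_eq_of_div in D; auto. lia.
Qed.

Lemma vp_pm_qpm q pm : is_prime q -> is_prime pm -> (q < pm)%nat -> vp pm (q*pm) = 1%nat.
Proof.
  intros Hq Hpm Hlt. pose proof (is_prime_ge2 _ Hq).
  apply vp_once; try lia.
  - nia.
  - apply Nat.Div0.mod_mul.
  - rewrite Nat.div_mul by lia. rewrite Nat.mod_small; lia.
Qed.

Lemma vp_p_qpm p q pm : is_prime p -> is_prime q -> is_prime pm -> p <> q -> p <> pm ->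
  vp p (q*pm) = 0%nat.
Proof.
  intros Hp Hq Hpm H1 H2. pose proof (is_prime_ge2 _ Hp).
  apply vp_nodiv. apply mod_ne0_of_notdiv; [lia|].
  intro D. apply nat_div_Z in D. rewrite Nat2Z.inj_mul in D.
  apply prime_mult in D; auto. destruct D as [D|D].
  - apply H1. apply Nat2Z.inj. apply prime_div_prime; auto.
  - apply H2. apply Nat2Z.inj. apply prime_div_prime; auto.
Qed.
Lemma pprod_ext f g N : (forall p, is_prime p -> f p = g p) -> pprod f N = pprod g N.
Proof.
  intros H. induction N as [|N IH]; simpl; [reflexivity|].
  rewrite IH. destruct (prime_dec (Z.of_nat N)) as [Hp|Hp]; [rewrite H by exact Hp|]; reflexivity.
Qed.

Lemma pprod_mul f g N : pprod (fun p => f p * g p) N = pprod f N * pprod g N.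
Proof.
  induction N as [|N IH]; simpl; [ring|].
  rewrite IH. destruct (prime_dec (Z.of_nat N)); ring.
Qed.

Lemma pprod_single q c N : is_prime q ->
  pprod (fun p => if (p =? q)%nat then c else 1) N = if (q <? N)%nat then c else 1.
Proof.
  intros Hq. induction N as [|N IH]; simpl; [reflexivity|].
  rewrite IH. destruct (Nat.eqb_spec N q) as [->|Hne].
  - destruct (prime_dec (Z.of_nat q)) as [_|Hn]; [|contradiction].
    replace (q <? q)%nat with false by (symmetry; apply Nat.ltb_irrefl).
    replace (q <? S q)%nat with true by (symmetry; apply Nat.ltb_lt; lia). ring.
  - replace (q <? S N)%nat with (q <? N)%nat.
    + destruct (prime_dec (Z.of_nat N)); ring.
    + destruct (Nat.ltb_spec q N), (Nat.ltb_spec q (S N)); auto; lia.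
Qed.

Lemma pprod_le f g N : (forall p, is_prime p -> 0 <= f p <= g p) -> pprod f N <= pprod g N
  /\ 0 <= pprod f N.
Proof.
  intros H. induction N as [|N IH]; simpl; [lra|].
  destruct IH as [IH1 IH2].
  destruct (prime_dec (Z.of_nat N)) as [Hp|Hp].
  - specialize (H N Hp). split.
    + apply Rmult_le_compat; lra.
    + apply Rmult_le_pos; lra.
  - lra.
Qed.

Lemma pprod_ge1 f N : (forall p, is_prime p -> 1 <= f p) -> 1 <= pprod f N.
Proof.
  intros H. induction N as [|N IH]; simpl; [lra|].
  destruct (prime_dec (Z.of_nat N)) as [Hp|Hp].
  - specialize (H N Hp). replace 1 with (1*1) by ring. apply Rmult_le_compat; lra.
  - lra.
Qed.

Lemma pprod_mono f N M : (forall p, is_prime p -> 1 <= f p) -> (N <= M)%nat ->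
  pprod f N <= pprod f M.
Proof.
  intros H HNM. induction HNM; [lra|]. simpl.
  pose proof (pprod_ge1 f m H). pose proof (pprod_ge1 f N H).
  destruct (prime_dec (Z.of_nat m)) as [Hp|Hp].
  - specialize (H m Hp). replace (pprod f N) with (pprod f N * 1) by ring.
    apply Rmult_le_compat; lra.
  - lra.
Qed.

Lemma pprod_ge_fp f p N : (forall p, is_prime p -> 1 <= f p) -> is_prime p -> (p < N)%nat ->
  f p <= pprod f N.
Proof.
  intros H Hp HN. induction HN.
  - simpl. destruct (prime_dec (Z.of_nat p)) as [_|Hn]; [|contradiction].
    pose proof (pprod_ge1 f p H). pose proof (H p Hp).
    replace (f p) with (1 * f p) at 1 by ring. apply Rmult_le_compat; lra.
  - simpl. destruct (prime_dec (Z.of_nat m)) as [Hq|Hq].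
    + pose proof (H m Hq). pose proof (H p Hp).
      replace (f p) with (f p * 1) by ring. apply Rmult_le_compat; lra.
    + lra.
Qed.

Lemma pprod_bound2 f N : (forall p, is_prime p -> 0 <= f p <= INR p ^ 2 / (INR p ^ 2 - 1)) ->
  pprod f N <= 2.
Proof.
  intros H.
  assert (K : forall N, pprod f (S (S N)) <= 2 * (INR N + 1) / (INR N + 2)).
  { clear N. induction N as [|N IH].
    - simpl. destruct (prime_dec 0) as [Hp|_]; [apply prime_ge_2 in Hp; lia|].
      destruct (prime_dec 1) as [Hp|_]; [apply prime_ge_2 in Hp; lia|]. lra.
    - pose proof (pos_INR N) as HN.
      change (pprod f (S (S (S N)))) with
        (pprod f (S (S N)) * (if prime_dec (Z.of_nat (S (S N))) then f (S (S N)) else 1)).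
      pose proof (proj2 (pprod_le f f (S (S N)) ltac:(intros p Hp; specialize (H p Hp); lra))) as P0.
      replace (INR (S N)) with (INR N + 1) by (rewrite S_INR; ring).
      assert (E : INR (S (S N)) = INR N + 2) by (rewrite !S_INR; ring).
      assert (B : (if prime_dec (Z.of_nat (S (S N))) then f (S (S N)) else 1) <=
                  (INR N + 2) ^ 2 / ((INR N + 2) ^ 2 - 1)
              /\ 0 <= (if prime_dec (Z.of_nat (S (S N))) then f (S (S N)) else 1)).
      { destruct (prime_dec (Z.of_nat (S (S N)))) as [Hp|Hp].
        - specialize (H _ Hp). rewrite E in H. lra.
        - split; [|lra]. apply Rcomplements.Rle_div_r.
          + nra.
          + nra. }
      destruct B as [B1 B2].
      apply Rle_trans with (2 * (INR N + 1) / (INR N + 2) * ((INR N + 2) ^ 2 / ((INR N + 2) ^ 2 - 1))).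
      + apply Rmult_le_compat; lra.
      + right. field. split; nra. }
  destruct N as [|[|N]].
  - simpl. lra.
  - simpl. destruct (prime_dec 0) as [Hp|_]; [apply prime_ge_2 in Hp; lia|]. lra.
  - eapply Rle_trans; [apply K|]. pose proof (pos_INR N).
    apply Rcomplements.Rle_div_l; lra.
Qed.
Definition useq (r : R) (s : Steinitz) (N : nat) := pprod (fun p => sigma_pp r p (s p)) N.

Lemma sig_lim r s : 2 <= r ->
  Lim_seq (useq r s) = Finite (sigma_r r s) /\ (forall N, useq r s N <= sigma_r r s).
Proof.
  intros Hr.
  assert (B : forall p, is_prime p -> 1 <= sigma_pp r p (s p) <= INR p ^ 2 / (INR p ^ 2 - 1)).
  { intros p Hp. pose proof (is_prime_ge2 _ Hp).
    destruct (sigma_pp_bounds r p (s p) Hr H) as [[H1 H2] [_ H3]]. split; lra. }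
  apply lim_facts.
  - intros N M HNM. apply pprod_mono; [|exact HNM]. intros p Hp; apply B, Hp.
  - intros N. split.
    + apply pprod_ge1. intros p Hp; apply B, Hp.
    + apply pprod_bound2. intros p Hp. specialize (B p Hp). lra.
Qed.

Lemma lim_evconst u c N0 : (forall n, (N0 <= n)%nat -> u n = c) -> Lim_seq u = Finite c.
Proof.
  intros H. rewrite <- (Lim_seq_incr_n u N0).
  rewrite (Lim_seq_ext _ (fun _ => c)). apply Lim_seq_const.
  intros n. apply H. lia.
Qed.

Lemma sigma_q r q : 2 <= r -> is_prime q -> sigma_r r (steinitz_of_nat q) = 1 + tt r q.
Proof.
  intros Hr Hq. destruct (sig_lim r (steinitz_of_nat q) Hr) as [L _].
  rewrite (lim_evconst _ (1 + tt r q) (S q)) in L.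
  - now injection L.
  - intros N HN. unfold useq.
    rewrite (pprod_ext _ (fun p => if (p =? q)%nat then 1 + tt r q else 1)).
    + rewrite pprod_single by exact Hq.
      replace (q <? N)%nat with true by (symmetry; apply Nat.ltb_lt; lia). reflexivity.
    + intros p Hp. pose proof (is_prime_ge2 _ Hp). unfold steinitz_of_nat.
      destruct (Nat.eqb_spec p q) as [->|Hne].
      * rewrite vp_q_q by exact Hq. now apply sigma_pp1.
      * rewrite vp_p_q by auto. now apply sigma_pp0.
Qed.

Lemma sigma_qpm r q pm : 2 <= r -> is_prime q -> is_prime pm -> (q < pm)%nat ->
  sigma_r r (steinitz_of_nat (q * pm)) = (1 + tt r q) * (1 + tt r pm).
Proof.
  intros Hr Hq Hpm Hlt. destruct (sig_lim r (steinitz_of_nat (q * pm)) Hr) as [L _].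
  rewrite (lim_evconst _ ((1 + tt r q) * (1 + tt r pm)) (S pm)) in L.
  - now injection L.
  - intros N HN. unfold useq.
    rewrite (pprod_ext _ (fun p => (if (p =? q)%nat then 1 + tt r q else 1) *
                                   (if (p =? pm)%nat then 1 + tt r pm else 1))).
    + rewrite pprod_mul, !pprod_single by assumption.
      replace (q <? N)%nat with true by (symmetry; apply Nat.ltb_lt; lia).
      replace (pm <? N)%nat with true by (symmetry; apply Nat.ltb_lt; lia). reflexivity.
    + intros p Hp. pose proof (is_prime_ge2 _ Hp). unfold steinitz_of_nat.
      destruct (Nat.eqb_spec p q) as [->|Hne].
      * replace (q =? pm)%nat with false by (symmetry; apply Nat.eqb_neq; lia).
        rewrite vp_q_qpm by auto. rewrite sigma_pp1 by lia. ring.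
      * destruct (Nat.eqb_spec p pm) as [->|Hne2].
        -- rewrite vp_pm_qpm by auto. rewrite sigma_pp1 by lia. ring.
        -- rewrite vp_p_qpm by auto. rewrite sigma_pp0 by lia. ring.
Qed.

Lemma key_ineq r p q pm : 2 <= r -> (2 <= p)%nat -> (p < q)%nat -> (pm > q * q)%nat ->
  (1 + tt r q) * (1 + tt r pm) <= 1 + tt r p.
Proof.
  intros Hr Hp Hpq Hpm.
  assert (Ip : 2 <= INR p) by (apply INR_ge2; lia).
  assert (Iq : INR p + 1 <= INR q) by (rewrite <- S_INR; apply le_INR; lia).
  assert (Im : INR q * INR q <= INR pm) by (rewrite <- mult_INR; apply le_INR; lia).
  set (P := INR p) in *. set (Q := INR q) in *. set (M := INR pm) in *.
  assert (Q3 : 3 <= Q) by lra.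
  set (A := Rpower P r). set (B := Rpower Q r). set (C := Rpower M r).
  assert (A0 : 0 < A) by (unfold A, Rpower; apply exp_pos).
  assert (B0 : 0 < B) by (unfold B, Rpower; apply exp_pos).
  assert (C0 : 0 < C) by (unfold C, Rpower; apply exp_pos).
  assert (HB : Q * Q <= B).
  { unfold B. replace (Q * Q) with (Rpower Q (INR 2)).
    - apply Rle_Rpower; [lra|]. simpl; lra.
    - rewrite Rpower_pow by lra. simpl; ring. }
  assert (HC : B * B <= C).
  { unfold B, C. rewrite Rpower_mult_distr by lra. apply Rle_Rpower_l; [lra|]. nra. }
  assert (HA : A * Q <= B * (Q - 1)).
  { unfold A, B. replace r with ((r - 1) + 1) by ring.
    rewrite !Rpower_plus, !Rpower_1 by lra.
    assert (0 < Rpower P (r - 1)) by (unfold Rpower; apply exp_pos).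
    assert (Rpower P (r - 1) <= Rpower Q (r - 1)) by (apply Rle_Rpower_l; lra).
    set (a := Rpower P (r - 1)) in *. set (b := Rpower Q (r - 1)) in *.
    assert (a * P * Q <= b * P * Q) by (apply Rmult_le_compat_r; [lra|apply Rmult_le_compat_r; lra]).
    assert (b * P <= b * (Q - 1)) by (apply Rmult_le_compat_l; lra).
    assert (b * P * Q <= b * (Q - 1) * Q) by (apply Rmult_le_compat_r; lra).
    nra. }
  unfold tt. fold P Q M. rewrite !Rpower_Ropp. fold A B C.
  set (x := / B). set (y := / C). set (z := / A).
  assert (x0 : 0 < x) by (apply Rinv_0_lt_compat; lra).
  assert (y0 : 0 < y) by (apply Rinv_0_lt_compat; lra).
  assert (Ey : y <= x * x).
  { unfold x, y. rewrite <- Rinv_mult. apply Rinv_le_contravar; nra. }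
  assert (Ex : x * (Q * Q) <= 1).
  { unfold x. apply (Rmult_le_reg_l B); [lra|]. field_simplify; lra. }
  assert (Ez : x * Q <= z * (Q - 1)).
  { unfold x, z. apply (Rmult_le_reg_l (A * B)); [nra|].
    field_simplify; try lra. }
  assert (S1 : x * (1 + x) * (Q - 1) <= 1).
  { assert (x <= 1/9). { apply (Rmult_le_reg_r (Q*Q)); nra. } nra. }
  assert (S2 : (y + x * y) * (Q - 1) <= x).
  { assert ((y + x*y) * (Q-1) <= (x*x + x * (x*x)) * (Q-1)).
    { apply Rmult_le_compat_r; [lra|]. nra. } nra. }
  assert ((x + y + x*y) * (Q - 1) <= z * (Q - 1)) by nra.
  assert (x + y + x*y <= z) by (apply (Rmult_le_reg_r (Q-1)); lra).
  nra.
Qed.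

Theorem mainTheorem5 (r : R) (q pm : nat) (n : Steinitz) :
  2 <= r ->
  mighty r q ->
  is_prime pm ->
  (pm > q * q)%nat ->
  sigma_r r (steinitz_of_nat q) < sigma_r r n ->
  sigma_r r n < sigma_r r (steinitz_of_nat (q * pm)) ->
  n q <> Fin 0 /\
  (forall p : nat, is_prime p -> (p < q)%nat -> n p = Fin 0).
Proof.
  intros Hr [Hq Hmig] Hpm Hgt Hlo Hhi.
  pose proof (is_prime_ge2 _ Hq) as Hq2.
  assert (Hqpm : (q < pm)%nat) by nia.
  rewrite sigma_q in Hlo by assumption.
  rewrite sigma_qpm in Hhi by assumption.
  destruct (sig_lim r n Hr) as [Ln Un].
  assert (C1 : forall p : nat, is_prime p -> (p < q)%nat -> n p = Fin 0).
  { intros p Hp Hpq. pose proof (is_prime_ge2 _ Hp).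
    destruct (n p) as [[|k]|] eqn:E; [reflexivity| |];
    (exfalso;
     assert (Hne : n p <> Fin 0) by (rewrite E; discriminate);
     destruct (sigma_pp_bounds r p (n p) Hr H) as [_ [G _]];
     specialize (G Hne);
     assert (sigma_pp r p (n p) <= useq r n (S p))
       by (apply (pprod_ge_fp (fun p => sigma_pp r p (n p))); [|exact Hp|lia]; intros p' Hp';
           exact (proj1 (proj1 (sigma_pp_bounds r p' (n p') Hr (is_prime_ge2 _ Hp'))))) ;
     specialize (Un (S p));
     pose proof (key_ineq r p q pm Hr H Hpq Hgt); lra). }
  split; [|exact C1].
  intros Hn0.
  set (g := fun p => if (q <? p)%nat then / (1 - Rpower (INR p) (- r)) else 1).
  assert (Bg : forall p, is_prime p -> 1 <= g p <= INR p ^ 2 / (INR p ^ 2 - 1)).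
  { intros p Hp. pose proof (is_prime_ge2 _ Hp). unfold g.
    destruct (q <? p)%nat.
    - destruct (sigma_pp_bounds r p Inf Hr H) as [[H1 H2] [_ H3]]. simpl in H1.
      unfold tt in H3. split; lra.
    - pose proof (INR_ge2 p H). split; [lra|]. apply Rcomplements.Rle_div_r; [nra|]. nra. }
  assert (Lg : Lim_seq (pprod g) = Finite (real (Lim_seq (pprod g)))).
  { apply lim_facts.
    - intros N M HNM. apply pprod_mono; [|exact HNM]. intros p Hp; apply Bg, Hp.
    - intros N. split.
      + apply pprod_ge1. intros p Hp; apply Bg, Hp.
      + apply pprod_bound2. intros p Hp. specialize (Bg p Hp). lra. }
  assert (Le : Rbar_le (Lim_seq (useq r n)) (Lim_seq (pprod g))).
  { apply Lim_seq_le_loc. exists 0%nat. intros N _. unfold useq.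
    apply pprod_le. intros p Hp. pose proof (is_prime_ge2 _ Hp) as H2.
    destruct (sigma_pp_bounds r p (n p) Hr H2) as [[H1 H3] _].
    split; [lra|]. unfold g.
    destruct (Nat.ltb_spec q p).
    - exact H3.
    - assert (n p = Fin 0).
      { destruct (Nat.eq_dec p q) as [->|Hne]; [exact Hn0|]. apply C1; [exact Hp|lia]. }
      rewrite H0, sigma_pp0 by exact H2. lra. }
  rewrite Ln, Lg in Le. simpl in Le.
  change (u_after r q) with (real (Lim_seq (pprod g))) in Hmig. unfold tt in Hlo. lra.
Qed.
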